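(* Let $\mathcal S$ be a finite poset, $\chi=(\chi_i)_{i\in\mathcal S}\in\mathbb R_+^{|\mathcal S|}$, and let $\mathcal U=(U;U_i)_{i\in\mathcal S}$ be an indecomposable $\chi$-representation of $\mathcal S$. Then the subspace representation $F(\mathcal U)$ is $\chi$-stable.
   Context: A unitary representation of a finite poset $\mathcal S$ is a tuple $(U;U_i)_{i\in\mathcal S}$ of a finite-dimensional complex unitary space $U$ and subspaces $U_i$ with $U_i\subseteq U_j$ whenever $i\prec j$. It is a $\chi$-representation if $\sum_{i\in\mathcal S}\chi_iP_{U_i}=\mathbb 1$, where $P_{U_i}$ is the orthogonal projection onto $U_i$. It is indecomposable if it is not unitarily equivalent to an orthogonal sum $(U'\perp U'';U'_i\perp U''_i)$ of two nonzero unitary representations. $F(\mathcal U)$ is the underlying subspace representation (forgetting the inner product). A subspace representation $(V;V_i)_{i\in\mathcal S}$ is $\chi$-stable if $\sum_{i\in\mathcal S}\chi_i\dim V_i=\dim V$ and $\sum_{i\in\mathcal S}\chi_i\dim(V_i\cap M)<\dim M$ for every subspace $M$ with $0\neq M\subsetneq V$. *)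

(* Defs.v *)
From HB Require Import structures.
From mathcomp Require Import all_boot all_order all_algebra.
From mathcomp Require Import reals.
From mathcomp.real_closed Require Import complex.
Set Implicit Arguments. Unset Strict Implicit. Unset Printing Implicit Defensive.
Import Order.TTheory GRing.Theory Num.Theory.
Local Open Scope ring_scope.

(* The unitary space U is C^n = 'rV[R[i]]_n with the standard inner product
   <u, v> = u *m (v^H), and a subspace is the row space of a matrix 'M_n. *)

Definition adjmx (R : realType) m n (A : 'M[R[i]]_(m, n)) : 'M[R[i]]_(n, m) :=
  (map_mx Num.conj A)^T.

(* Orthogonal projection onto the row space of A (row-vector convention:
   v |-> v *m orthproj A).  With B a basis of the rows of A,
   P = B^H (B B^H)^{-1} B. *)
Definition orthproj (R : realType) n (A : 'M[R[i]]_n) : 'M[R[i]]_n :=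
  let B := row_base A in adjmx B *m invmx (B *m adjmx B) *m B.

Definition unitary_rep (R : realType) (d : Order.disp_t) (S : finPOrderType d)
  n (U : S -> 'M[R[i]]_n) : Prop :=
  forall i j : S, (i <= j)%O -> (U i <= U j)%MS.

Definition chi_rep (R : realType) (d : Order.disp_t) (S : finPOrderType d)
  (chi : S -> R) n (U : S -> 'M[R[i]]_n) : Prop :=
  unitary_rep U /\ \sum_(i : S) ((chi i)%:C)%C *: orthproj (U i) = 1%:M.

(* Decomposable: unitarily equivalent (via a unitary W : C^n -> C^(n1+n2))
   to an orthogonal sum of two nonzero unitary representations
   (C^n1; A_i) _|_ (C^n2; B_i), i.e. W maps U_i onto A_i (+) B_i. *)
Definition decomposable (R : realType) (d : Order.disp_t) (S : finPOrderType d)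
  n (U : S -> 'M[R[i]]_n) : Prop :=
  exists n1 n2 : nat, exists (W : 'M[R[i]]_(n, n1 + n2)),
  exists (A : S -> 'M[R[i]]_n1) (B : S -> 'M[R[i]]_n2),
    [/\ (0 < n1)%N, (0 < n2)%N,
        W *m adjmx W = 1%:M /\ adjmx W *m W = 1%:M,
        unitary_rep A /\ unitary_rep B &
        forall i, (U i *m W :=: block_mx (A i) 0 0 (B i))%MS].

Definition indecomposable (R : realType) (d : Order.disp_t) (S : finPOrderType d)
  n (U : S -> 'M[R[i]]_n) : Prop := ~ decomposable U.

(* chi-stability of the underlying subspace representation (C^n; U_i). *)
Definition chi_stable (R : realType) (d : Order.disp_t) (S : finPOrderType d)
  (chi : S -> R) n (U : S -> 'M[R[i]]_n) : Prop :=
  \sum_(i : S) chi i * (\rank (U i))%:R = n%:R /\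
  forall M : 'M[R[i]]_n, (0 < \rank M)%N -> (\rank M < n)%N ->
    \sum_(i : S) chi i * (\rank (U i :&: M)%MS)%:R < (\rank M)%:R.

(* Main.v *)
Require Import Defs.
From HB Require Import structures.
From mathcomp Require Import all_boot all_order all_algebra.
From mathcomp Require Import reals.
From mathcomp.real_closed Require Import complex.
Import Order.TTheory GRing.Theory Num.Theory Num.Def.
Set Implicit Arguments. Unset Strict Implicit. Unset Printing Implicit Defensive.
Local Open Scope ring_scope.

Section Aux.
Variable R : realType.
Local Notation C := (R[i] : numClosedFieldType).

Lemma adjE m n (A : 'M[C]_(m,n)) : adjmx A = map_mx conjC (A ^T).
Proof. by rewrite /adjmx map_trmx. Qed.

Lemma adjmxM m n p (A : 'M[C]_(m,n)) (B : 'M[C]_(n,p)) :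
  adjmx (A *m B) = adjmx B *m adjmx A.
Proof. by rewrite /adjmx map_mxM trmx_mul. Qed.

Lemma adjmxK m n (A : 'M[C]_(m,n)) : adjmx (adjmx A) = A.
Proof. by apply/matrixP => i j; rewrite !mxE conjCK. Qed.

Lemma adjmxD m n (A B : 'M[C]_(m,n)) : adjmx (A + B) = adjmx A + adjmx B.
Proof. by apply/matrixP => i j; rewrite !mxE rmorphD. Qed.

Lemma adjmxN m n (A : 'M[C]_(m,n)) : adjmx (- A) = - adjmx A.
Proof. by apply/matrixP => i j; rewrite !mxE rmorphN. Qed.

Lemma adjmxB m n (A B : 'M[C]_(m,n)) : adjmx (A - B) = adjmx A - adjmx B.
Proof. by rewrite adjmxD adjmxN. Qed.

Lemma adjmx1 n : adjmx (1%:M : 'M[C]_n) = 1%:M.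
Proof. by apply/matrixP => i j; rewrite !mxE rmorph_nat eq_sym. Qed.

Definition sch m n (A : 'M[C]_(m,n)) := @schmidt C _ _ (row_base A).

Lemma sch_unit m n (A : 'M[C]_(m,n)) : sch A *m adjmx (sch A) = 1%:M.
Proof.
by rewrite adjE; apply/unitarymxP; apply: schmidt_unitarymx; rewrite rank_leq_col.
Qed.

Lemma sch_eq m n (A : 'M[C]_(m,n)) : (sch A :=: A)%MS.
Proof.
exact: (eqmx_trans (eqmx_schmidt_free (row_base_free A)) (eq_row_base A)).
Qed.

Lemma orthprojE n (A : 'M[C]_n) : orthproj A = adjmx (sch A) *m sch A.
Proof.
rewrite /orthproj.
set B := row_base A; set E := sch A.
have [D BE] : exists D, B = D *m E.
  by apply/submxP; rewrite /E (sch_eq A) -(eq_row_base A).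
have DE : D = B *m adjmx E by rewrite BE -mulmxA sch_unit mulmx1.
have Du : D \in unitmx.
  have h : (\rank B <= \rank D)%N by rewrite {1}BE mxrankM_maxl.
  rewrite (eqP (row_base_free A)) in h.
  by rewrite -row_free_unit /row_free eqn_leq rank_leq_row h.
have Dhu : adjmx D \in unitmx by rewrite adjE map_unitmx unitmx_tr.
have G : B *m adjmx B = D *m adjmx D.
  by rewrite BE adjmxM mulmxA -(mulmxA D) sch_unit mulmx1.
have Gu : B *m adjmx B \in unitmx by rewrite G unitmx_mul Du Dhu.
have Z : adjmx D *m invmx (B *m adjmx B) *m D = 1%:M.
  have : D *m (adjmx D *m invmx (B *m adjmx B) *m D) = D.
    by rewrite !mulmxA -G mulmxV // mul1mx.
  move=> H; rewrite -(mulKmx Du (adjmx D *m _ *m D)) H mulVmx //.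
set G' := invmx (B *m adjmx B) in Z *.
rewrite BE adjmxM -!mulmxA (mulmxA (adjmx D)) (mulmxA (adjmx D *m _)).
by rewrite Z mul1mx.
Qed.

Lemma proj_herm n (A : 'M[C]_n) : adjmx (orthproj A) = orthproj A.
Proof. by rewrite orthprojE adjmxM adjmxK. Qed.

Lemma proj_idem n (A : 'M[C]_n) : orthproj A *m orthproj A = orthproj A.
Proof.
by rewrite orthprojE -mulmxA (mulmxA (sch A)) sch_unit mul1mx.
Qed.

Lemma proj_id m n (A : 'M[C]_n) (X : 'M[C]_(m, n)) :
  (X <= A)%MS -> X *m orthproj A = X.
Proof.
rewrite -(sch_eq A) => /submxP [D ->].
by rewrite orthprojE -!mulmxA (mulmxA (sch A)) sch_unit mul1mx.
Qed.

Lemma proj_sub m n (A : 'M[C]_n) (X : 'M[C]_(m, n)) :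
  (X *m orthproj A <= A)%MS.
Proof. by rewrite orthprojE mulmxA -(sch_eq A) submxMl. Qed.

Lemma proj_self n (A : 'M[C]_n) : (orthproj A <= A)%MS.
Proof. by rewrite -[orthproj A]mul1mx proj_sub. Qed.

Lemma proj_orth m p n (A : 'M[C]_n) (X : 'M[C]_(m, n)) (Y : 'M[C]_(p, n)) :
  (Y <= A)%MS -> (X - X *m orthproj A) *m adjmx Y = 0.
Proof.
rewrite -(sch_eq A) => /submxP [D ->].
rewrite adjmxM mulmxA mulmxBl orthprojE -!mulmxA sch_unit mulmx1 subrr.
by rewrite mul0mx.
Qed.

Lemma proj_tr n (A : 'M[C]_n) : \tr (orthproj A) = (\rank A)%:R.
Proof.
by rewrite orthprojE mxtrace_mulC sch_unit mxtrace1.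
Qed.

Definition fro m n (X : 'M[C]_(m, n)) := \tr (adjmx X *m X).

Lemma froE m n (X : 'M[C]_(m, n)) :
  fro X = \sum_j \sum_i `|X i j| ^+ 2.
Proof.
rewrite /fro /mxtrace; apply: eq_bigr => j _; rewrite mxE.
by apply: eq_bigr => i _; rewrite !mxE normCK mulrC.
Qed.

Lemma fro_ge0 m n (X : 'M[C]_(m, n)) : 0 <= fro X.
Proof.
by rewrite froE; apply: sumr_ge0 => j _; apply: sumr_ge0 => i _; apply: exprn_ge0.
Qed.

Lemma fro_eq0 m n (X : 'M[C]_(m, n)) : fro X = 0 -> X = 0.
Proof.
rewrite froE => H; apply/matrixP => i j; rewrite mxE.
have H1 := psumr_eq0P (fun a _ => sumr_ge0 _ (fun b _ => exprn_ge0 2 (normr_ge0 (X b a)))) H.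
have H2 := @psumr_eq0P _ _ xpredT (fun b => `|X b j| ^+ 2) (fun b _ => exprn_ge0 2 (normr_ge0 (X b j))) (H1 j isT) i isT.
by move/eqP: H2; rewrite expf_eq0 /= normr_eq0 => /eqP.
Qed.

Lemma key_tr n (U M : 'M[C]_n) :
  \tr (orthproj M *m orthproj U *m orthproj M) =
  (\rank (U :&: M)%MS)%:R + fro (orthproj U *m orthproj M - orthproj (U :&: M)%MS).
Proof.
set P := orthproj U; set Q := orthproj M; set K := orthproj (U :&: M)%MS.
have KP : K *m P = K by apply: proj_id; apply: submx_trans (proj_self _) (capmxSl U M).
have KQ : K *m Q = K by apply: proj_id; apply: submx_trans (proj_self _) (capmxSr U M).
have PK : P *m K = K by rewrite -[P]proj_herm -[K]proj_herm -adjmxM KP.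
have QK : Q *m K = K by rewrite -[Q]proj_herm -[K]proj_herm -adjmxM KQ.
have KK : K *m K = K by apply: proj_idem.
have PP : P *m P = P by apply: proj_idem.
rewrite /fro adjmxB adjmxM !proj_herm -/P -/Q -/K.
rewrite mulmxBl !mulmxBr.
have e1 : Q *m P *m (P *m Q) = Q *m P *m Q by rewrite mulmxA -(mulmxA Q P P) PP.
have e2 : Q *m P *m K = K by rewrite -mulmxA PK QK.
have e3 : K *m (P *m Q) = K by rewrite mulmxA KP KQ.
rewrite e1 e2 e3 KK subrr subr0 raddfB /= -proj_tr -/K.
by rewrite addrC subrK.
Qed.

Local Notation "B ^!" :=
  (orthomx conjC (mx_of_hermitian (hermitian1mx _)) B) : matrix_set_scope.

Lemma perpP m p n (X : 'M[C]_(m, n)) (M : 'M[C]_(p, n)) :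
  reflect (X *m adjmx M = 0) (X <= M^!)%MS.
Proof. by rewrite adjE; apply: orthomx1P. Qed.

Lemma perp0 m p q n (X : 'M[C]_(m, n)) (Y : 'M[C]_(q, n)) (M : 'M[C]_(p, n)) :
  (X <= M^!)%MS -> (Y <= M)%MS -> X *m adjmx Y = 0.
Proof.
move=> /perpP XM /submxP [D ->]; by rewrite adjmxM mulmxA XM mul0mx.
Qed.

Lemma perp0' m p q n (X : 'M[C]_(m, n)) (Y : 'M[C]_(q, n)) (M : 'M[C]_(p, n)) :
  (X <= M)%MS -> (Y <= M^!)%MS -> X *m adjmx Y = 0.
Proof.
move=> XM YM; rewrite -[X]adjmxK -adjmxM (perp0 YM XM).
by apply/matrixP => i j; rewrite !mxE rmorph0.
Qed.

Lemma adjmx_col m1 m2 n (A : 'M[C]_(m1, n)) (B : 'M[C]_(m2, n)) :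
  adjmx (col_mx A B) = row_mx (adjmx A) (adjmx B).
Proof. by rewrite /adjmx map_col_mx tr_col_mx. Qed.

Lemma row_mx_subl m1 m2 p k (X : 'M[C]_(m1, p)) (Y : 'M[C]_(m2, p)) :
  (X <= Y)%MS -> (row_mx X (0 : 'M_(m1, k)) <= row_mx Y (0 : 'M_(m2, k)))%MS.
Proof.
move/submxP=> [D ->].
have -> : row_mx (D *m Y) (0 : 'M_(m1, k)) = D *m row_mx Y 0 by rewrite mul_mx_row mulmx0.
exact: submxMl.
Qed.

Lemma row_mx_subr m1 m2 p k (X : 'M[C]_(m1, p)) (Y : 'M[C]_(m2, p)) :
  (X <= Y)%MS -> (row_mx (0 : 'M_(m1, k)) X <= row_mx (0 : 'M_(m2, k)) Y)%MS.
Proof.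
move/submxP=> [D ->].
have -> : row_mx (0 : 'M_(m1, k)) (D *m Y) = D *m row_mx 0 Y by rewrite mul_mx_row mulmx0.
exact: submxMl.
Qed.

Lemma decomp (d : Order.disp_t) (S : finPOrderType d) n (U : S -> 'M[C]_n)
  (M : 'M[C]_n) : unitary_rep U -> (0 < \rank M)%N -> (\rank M < n)%N ->
  (forall i, orthproj (U i) *m orthproj M = orthproj M *m orthproj (U i)) ->
  decomposable U.
Proof.
move=> Urep rM0 rMn comm.
set Q := orthproj M.
pose E1 := sch M; pose E2 := sch (M^!)%MS.
exists (\rank M), (\rank (M^!)%MS), (adjmx (col_mx E1 E2)),
  (fun i => <<(U i :&: M)%MS *m adjmx E1>>%MS),
  (fun i => <<(U i :&: M^!)%MS *m adjmx E2>>%MS).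
have Eu : col_mx E1 E2 *m adjmx (col_mx E1 E2) = 1%:M.
  by rewrite adjE; apply/unitarymxP; apply: schmidt_complete_unitarymx.
split.
- exact: rM0.
- by rewrite rank_ortho subn_gt0.
- rewrite adjmxK; split=> //.
  set E := col_mx E1 E2 in Eu *.
  apply/eqP; rewrite -subr_eq0 -(mulmx_free_eq0 _ (B := adjmx E)).
    by rewrite mulmxBl -mulmxA Eu mulmx1 mul1mx subrr.
  rewrite /row_free adjE mxrank_map mxrank_tr.
  by rewrite mxrank_unitary ?add_rank_ortho //; apply/unitarymxP; rewrite -adjE.
- split=> i j lij; rewrite !genmxE; apply: submxMr; apply: capmxS => //; exact: Urep.
move=> i.
set V := U i; set P := orthproj V.
have VP : V *m P = V by apply: proj_id.
have s1 : (V *m Q <= V :&: M)%MS.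
  rewrite sub_capmx proj_sub andbT -{1}VP -mulmxA comm mulmxA; exact: proj_sub.
have s2 : (V - V *m Q <= V :&: M^!)%MS.
  rewrite sub_capmx; apply/andP; split.
    have -> : V - V *m Q = (V - V *m Q) *m P.
      by rewrite mulmxBl -(mulmxA V Q P) -comm (mulmxA V P Q) !VP.
    exact: proj_sub.
  by apply/perpP; apply: proj_orth.
have sV : (V <= (V :&: M) + (V :&: M^!))%MS.
  by rewrite -{1}[V](subrK (V *m Q)) addrC addmx_sub_adds.
have z1 : (V :&: M)%MS *m adjmx E2 = 0.
  apply: (perp0' (M := M)); first exact: capmxSr.
  by rewrite /E2 (sch_eq (M^!)%MS).
have z2 : (V :&: M^!)%MS *m adjmx E1 = 0.
  apply: (perp0 (M := M)); first exact: capmxSr.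
  by rewrite /E1 (sch_eq M).
rewrite adjmx_col block_mxEv.
set X1 := (V :&: M)%MS *m adjmx E1; set X2 := (V :&: M^!)%MS *m adjmx E2.
have g1 : (X1 <= <<X1>>)%MS by rewrite genmxE.
have g1' : (<<X1>> <= X1)%MS by rewrite genmxE.
have g2 : (X2 <= <<X2>>)%MS by rewrite genmxE.
have g2' : (<<X2>> <= X2)%MS by rewrite genmxE.
apply/eqmxP; apply/andP; split.
  apply: submx_trans (submxMr _ sV) _.
  rewrite addsmxMr addsmx_sub !mul_mx_row z1 z2 -/X1 -/X2; apply/andP; split.
    by rewrite -addsmxE; apply: submx_trans (addsmxSl _ _); apply: row_mx_subl.
  by rewrite -addsmxE; apply: submx_trans (addsmxSr _ _); apply: row_mx_subr.
rewrite col_mx_sub; apply/andP; split.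
  apply: submx_trans (row_mx_subl _ g1') _.
  by rewrite -z1 -mul_mx_row submxMr ?capmxSl.
apply: submx_trans (row_mx_subr _ g2') _.
by rewrite -z2 -mul_mx_row submxMr ?capmxSl.
Qed.
End Aux.

Theorem lemma2 (R : realType) (d : Order.disp_t) (S : finPOrderType d)
  (chi : S -> R) (n : nat) (U : S -> 'M[R[i]]_n) :
  (forall i, 0 < chi i) ->
  chi_rep chi U -> indecomposable U ->
  chi_stable chi U.
Proof.
move=> chipos [Urep Hsum] Hind.
have cpos : forall i, 0 < (chi i)%:C%C :> R[i] by move=> i; rewrite ltcR.
have Cinj : forall x y : R, x%:C%C = y%:C%C -> x = y.
  by move=> x y /(congr1 (@complex.Re R)).
split.
  apply: Cinj; rewrite rmorph_sum rmorph_nat.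
  have := congr1 mxtrace Hsum; rewrite mxtrace1 raddf_sum /= => <-.
  apply: eq_bigr => i _; rewrite mxtraceZ proj_tr rmorphM rmorph_nat //.
move=> M rM0 rMn.
rewrite ltNge; apply/negP => Hle.
pose Q := orthproj M.
pose P i := orthproj (U i).
pose K i := orthproj (U i :&: M)%MS.
pose c i := (chi i)%:C%C : R[i].
pose F := \sum_i c i * fro (P i *m Q - K i).
have eq1 : (\rank M)%:R = (\sum_i chi i * (\rank (U i :&: M)%MS)%:R)%:C%C + F.
  have e : orthproj M = Q *m 1%:M *m Q by rewrite mulmx1 proj_idem.
  rewrite -proj_tr {1}e -Hsum mulmx_sumr mulmx_suml raddf_sum /=.
  rewrite rmorph_sum -big_split /=; apply: eq_bigr => i _.
  rewrite -scalemxAr -scalemxAl mxtraceZ /Q key_tr rmorphM rmorph_nat.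
  by rewrite mulrDr.
have F0 : 0 <= F.
  by apply: sumr_ge0 => i _; apply: mulr_ge0; [exact: (ltW (cpos i)) | exact: fro_ge0].
have F0' : F <= 0.
  rewrite -(lerD2l ((\sum_i chi i * (\rank (U i :&: M)%MS)%:R)%:C%C)) addr0 -eq1.
  by rewrite -(rmorph_nat (real_complex R)) lecR.
have FF : F = 0 by apply/eqP; rewrite eq_le F0 F0'.
have Hi : forall i, P i *m Q = K i.
  move=> i; apply/eqP; rewrite -subr_eq0; apply/eqP; apply: fro_eq0.
  have := @psumr_eq0P _ _ xpredT (fun j => c j * fro (P j *m Q - K j)) (fun j _ => mulr_ge0 (ltW (cpos j)) (fro_ge0 (P j *m Q - K j))) FF i isT.
  by move/eqP; rewrite mulf_eq0 (gt_eqF (cpos i)) /= => /eqP.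
apply: Hind; apply: (decomp Urep rM0 rMn) => i.
move: (Hi i); rewrite /P /Q /K => h.
have h2 := congr1 (@adjmx R _ _) h; rewrite adjmxM !proj_herm in h2.
by rewrite h h2.
Qed.
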